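(* Let $R$ be an associative ring with identity and involution $*$, and let $a\in R^{\#}\cap R^{\dagger}$. Then $a\in R^{SEP}$ if and only if $a(a^{\#})^*a^{\dagger}$ and $a^{\dagger}a^2$ are left $a$-equivalent, i.e. $a\cdot a(a^{\#})^*a^{\dagger}=a\cdot a^{\dagger}a^2$.
   Context: An involution on $R$ is a map $x\mapsto x^*$ with $(x^* )^*=x$, $(x+y)^*=x^*+y^*$, $(xy)^*=y^*x^*$. An element $a$ is Moore–Penrose invertible if there is $b$ with $aba=a$, $bab=b$, $(ab)^*=ab$, $(ba)^*=ba$; such $b$ is unique, denoted $a^{\dagger}$, and $R^{\dagger}$ is the set of such $a$. An element $a$ is group invertible if there is $b$ with $aba=a$, $bab=b$, $ab=ba$; such $b$ is unique, denoted $a^{\#}$, and $R^{\#}$ is the set of such $a$. For $a\in R^{\#}\cap R^{\dagger}$, $a$ is SEP if $a^*=a^{\dagger}=a^{\#}$; $R^{SEP}$ denotes the set of SEP elements. For $x,b,c\in R$, $b$ and $c$ are left $x$-equivalent if $xb=xc$. *)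

(* Defs.v *)
From mathcomp Require Import all_boot all_algebra.
Set Implicit Arguments. Unset Strict Implicit. Unset Printing Implicit Defensive.
Import GRing.Theory.
Local Open Scope ring_scope.

Definition involution (R : pzRingType) (inv : R -> R) : Prop :=
  (forall x, inv (inv x) = x) /\
  (forall x y, inv (x + y) = inv x + inv y) /\
  (forall x y, inv (x * y) = inv y * inv x).

Definition is_MP (R : pzRingType) (inv : R -> R) (a b : R) : Prop :=
  a * b * a = a /\ b * a * b = b /\ inv (a * b) = a * b /\ inv (b * a) = b * a.

Definition is_group_inv (R : pzRingType) (a b : R) : Prop :=
  a * b * a = a /\ b * a * b = b /\ a * b = b * a.

Definition MP_invertible (R : pzRingType) (inv : R -> R) (a : R) : Prop :=
  exists b, is_MP inv a b.

Definition group_invertible (R : pzRingType) (a : R) : Prop :=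
  exists b, is_group_inv a b.

Definition is_SEP (R : pzRingType) (inv : R -> R) (a : R) : Prop :=
  exists b c, is_MP inv a b /\ is_group_inv a c /\ inv a = b /\ b = c.

Definition left_equiv (R : pzRingType) (x b c : R) : Prop := x * b = x * c.

(* Main.v *)
Require Import Defs.
From mathcomp Require Import all_boot all_algebra.
Import GRing.Theory.
Local Open Scope ring_scope.

Lemma MP_uniq (R : pzRingType) (inv : R -> R) a x y :
  involution inv -> is_MP inv a x -> is_MP inv a y -> x = y.
Proof.
move=> [ii [_ im]] [x1 [x2 [x3 x4]]] [y1 [y2 [y3 y4]]].
have ha: inv a = inv a * (a*y) by rewrite -{1}y1 im y3.
have e1: x = x * a * y.
  rewrite -{1}x2.
  have -> : x * a * x = x * inv (a * x) by rewrite x3 mulrA.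
  rewrite im ha !mulrA -(mulrA x (inv x)) -im x3 !mulrA x2 //.
have hb: inv a = x * a * inv a by rewrite -{1}x1 -mulrA im x4.
have e2: y = x * a * y.
  rewrite -{1}y2.
  have -> : y * a * y = inv (y * a) * y by rewrite y4.
  rewrite im {1}hb -!mulrA (mulrA (inv a)) -im y4 y2 mulrA //.
exact: etrans e1 (esym e2).
Qed.

Lemma G_uniq (R : pzRingType) (a x y : R) :
  is_group_inv a x -> is_group_inv a y -> x = y.
Proof.
move=> [x1 [x2 x3]] [y1 [y2 y3]].
have h1: a * x * (a * y) = a * y by rewrite mulrA x1.
have h2: a * x * (a * y) = a * x by rewrite x3 y3 -mulrA (mulrA a y a) y1.
have e: a * x = a * y by rewrite -h2 h1.
by rewrite -{1}x2 -mulrA e mulrA -x3 e y3 y2.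
Qed.

Theorem theorem5p1 (R : pzRingType) (inv : R -> R) (a adag asharp : R) :
  involution inv ->
  is_MP inv a adag ->
  is_group_inv a asharp ->
  (is_SEP inv a <->
   left_equiv a (a * inv asharp * adag) (adag * a ^+ 2)).
Proof.
move=> Hinv Hb Hc; have Hinv' := Hinv; move: Hinv' => [ii [_ im]].
have Hb' := Hb; have Hc' := Hc.
move: Hb' Hc' => [b1 [b2 [b3 b4]]] [c1 [c2 c3]].
have caa : asharp * a * a = a by rewrite -c3 c1.
have cca : asharp * asharp * a = asharp by rewrite -mulrA -c3 mulrA c2.
split.
  move=> [b [c [Hb2 [Hc2 [ia bc]]]]].
  have eb := @MP_uniq _ _ _ _ _ Hinv Hb Hb2; have ec := @G_uniq _ _ _ _ Hc Hc2.
  have hadag : adag = asharp by rewrite eb ec bc.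
  have hinv : inv asharp = a by rewrite ec -bc -ia ii.
  rewrite /left_equiv hinv hadag expr2.
  by rewrite -(mulrA a a asharp) c3 (mulrA a asharp a) c1 (mulrA asharp a a) caa.
rewrite /left_equiv => H.
have s1 : a * inv asharp * adag = a.
  have := congr1 (fun z => asharp * z) H.
  have r : asharp*(a*(adag*a^+2)) = a.
    by rewrite expr2 (mulrA adag a a) (mulrA a (adag*a) a) (mulrA a adag a) b1 mulrA caa.
  have l : asharp*(a*(a*inv asharp*adag)) = a*inv asharp*adag by rewrite !mulrA caa.
  by rewrite l r.
have s2 : inv a * (a * adag) = inv a by rewrite -b3 -im b1.
have s3 : adag * (inv adag * inv a) = adag by rewrite -im b3 mulrA b2.
set y := a * inv asharp * adag * inv adag.
have ya : y * inv a = a by rewrite /y -mulrA -(mulrA _ adag) s3 s1.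
have s4 : a = a * a * adag.
  by rewrite -{1}ya -s2 (mulrA y (inv a)) ya mulrA.
have s5 : asharp * a = a * adag by rewrite {1}s4 !mulrA caa.
have s6 : is_MP inv a asharp.
  split; first exact: c1. split; first exact: c2.
  split; first by rewrite c3 s5 b3. by rewrite s5 b3.
have e := @MP_uniq _ _ _ _ _ Hinv Hb s6.
have s7 : a * inv asharp * asharp = a by have := s1; rewrite e.
have s8 : asharp * inv asharp * asharp = asharp.
  have := congr1 (fun z => asharp * asharp * z) s7.
  by rewrite /= !mulrA cca; apply.
have s9 : is_MP inv asharp (inv asharp).
  split; first exact: s8. split.
    have := congr1 inv s8. by rewrite !im ii mulrA; apply.
  by split; rewrite im ii.
have s10 : is_MP inv asharp a.
  move: s6 => [_ [_ [h3 h4]]].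
  by split; [exact: c2 | split; [exact: c1 | split]].
have e2 := @MP_uniq _ _ _ _ _ Hinv s9 s10.
have ia : inv a = asharp by rewrite -e2 ii.
exists adag, asharp; split; first exact: Hb. split; first exact: Hc.
by rewrite ia e.
Qed.
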